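(* Let $F_1,\dots,F_J\in\mathbb{Z}^2$ ($J\ge2$) be the vertices of a convex polygonal curve in the following sense: the interiors of the segments $\overline{F_iF_{i+1}}$ are mutually disjoint, and writing $\overrightarrow{F_iF_{i+1}}=L_i(\cos\beta_i,\sin\beta_i)$ for $i=1,\dots,J-1$, we have $L_i>0$ and $\beta_{i+1}>\beta_i$. Suppose $\beta_{J-1}-\beta_1\le2\pi$ and set $L=\sum_{i=1}^{J-1}L_i$. Then $$J\le2+(\beta_{J-1}-\beta_1)^{1/3}L^{2/3}.$$ *)

(* Defs.v *)
From HB Require Import structures.
From mathcomp Require Import all_boot all_order all_algebra.
From mathcomp Require Import all_classical all_reals all_analysis.
Set Implicit Arguments. Unset Strict Implicit. Unset Printing Implicit Defensive.
Import Order.TTheory GRing.Theory Num.Theory.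
Local Open Scope ring_scope.
Local Open Scope classical_set_scope.

Definition ptR (R : realType) (p : int * int) : R * R := (p.1%:~R, p.2%:~R).

Definition open_seg (R : realType) (P Q : R * R) : set (R * R) :=
  [set X | exists t : R, 0 < t < 1 /\
     X = ((1 - t) * P.1 + t * Q.1, (1 - t) * P.2 + t * Q.2)].

(* Main.v *)
Require Import Defs.
From mathcomp Require Import all_boot all_order all_algebra.
From mathcomp Require Import all_classical all_reals all_analysis.
From mathcomp Require Import ring lra.
Import Order.TTheory GRing.Theory Num.Theory.
Local Open Scope ring_scope.
Local Open Scope classical_set_scope.

Lemma tangent (R : realType) (x y c : R) : 0 < x -> 0 < y -> 0 < c ->
  3 * c^+2 - (x + y) * c^+3 <= 1 / (x * y).
Proof.
move=> x0 y0 c0.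
rewrite ler_pdivlMr ?mulr_gt0 //.
set t := c * (x + y).
have ht : 0 < t by rewrite mulr_gt0 ?addr_gt0.
have e : (3 * c^+2 - (x + y) * c^+3) = c^+2 * (3 - t) by rewrite /t; ring.
rewrite e.
have hxy : x * y <= (x + y)^+2 / 4.
  rewrite ler_pdivlMr //; have := sqr_ge0 (x - y); nra.
case: (lerP (3 - t) 0) => h.
  have : c^+2 * (3 - t) <= 0 by rewrite mulr_ge0_le0 // sqr_ge0.
  move=> h2; have : 0 <= x * y by rewrite mulr_ge0 // ltW. nra.
have h3 : c ^+ 2 * (3 - t) * (x * y) <= c ^+ 2 * (3 - t) * ((x + y) ^+ 2 / 4).
  by rewrite ler_wpM2l // mulr_ge0 ?sqr_ge0 // ltW.
apply: (le_trans h3).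
have -> : c ^+ 2 * (3 - t) * ((x + y) ^+ 2 / 4) = t^+2 * (3 - t) / 4 by rewrite /t; field.
rewrite ler_pdivrMr //.
have h1 : 0 <= t + 1 by rewrite addr_ge0 // ltW.
have := mulr_ge0 (sqr_ge0 (t - 2)) h1; nra.
Qed.

Lemma core (R : realType) (m : nat) (l b : nat -> R) :
  (forall i, (i <= m)%N -> 0 < l i) ->
  (forall i, (i < m)%N -> 1 / (l i * l i.+1) <= b i.+1 - b i) ->
  (m%:R : R)^+3 <= (b m - b 0%N) * (\sum_(0 <= i < m.+1) l i)^+2.
Proof.
case: m => [|m] lpos hb.
  by rewrite subrr mul0r expr0n /=.
set S := \sum_(0 <= i < m.+2) l i.
have S0 : 0 < S.
  rewrite /S big_nat_recr //= ltr_pwDr ?lpos //.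
  rewrite big_nat_cond; apply: sumr_ge0 => i /andP[/andP[_ hi] _].
  by rewrite ltW // lpos // ltnW.
set c := (m.+1%:R : R) / S.
have c0 : 0 < c by rewrite divr_gt0.
have htel : b m.+1 - b 0%N = \sum_(0 <= i < m.+1) (b i.+1 - b i).
  by rewrite telescope_sumr.
have h1 : \sum_(0 <= i < m.+1) (3 * c^+2 - (l i + l i.+1) * c^+3)
     <= b m.+1 - b 0%N.
  rewrite htel; apply: ler_sum_nat => i /andP[_ hi].
  apply: le_trans (hb _ hi); apply: tangent => //; apply: lpos => //.
  exact: ltnW.
have eA : S = \sum_(0 <= i < m.+1) l i + l m.+1 by rewrite /S big_nat_recr.
have eB : S = l 0%N + \sum_(0 <= i < m.+1) l i.+1.
  by rewrite /S big_nat_recl.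
have e2 : \sum_(0 <= i < m.+1) (3 * c^+2 - (l i + l i.+1) * c^+3)
   = 3 * c^+2 * m.+1%:R - (\sum_(0 <= i < m.+1) l i + \sum_(0 <= i < m.+1) l i.+1) * c^+3.
  by rewrite sumrB sumr_const_nat subn0 -mulr_suml big_split /= mulr_natr.
rewrite e2 in h1.
have l0 := lpos 0%N isT.
have lm := lpos m.+1 (leqnn _).
have hc3 : 0 <= c ^+ 3 by rewrite exprn_ge0 // ltW.
have h2 : 3 * c^+2 * m.+1%:R - 2 * S * c^+3 <= b m.+1 - b 0%N.
  apply: le_trans h1; rewrite lerB // ler_wpM2r //; lra.
have cS : c * S = m.+1%:R by rewrite /c divfK // gt_eqF.
have h3 := ler_wpM2r (ltW (exprn_gt0 2 S0)) h2.
apply: le_trans h3; rewrite -cS le_eqVlt; apply/orP; left; apply/eqP; ring.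
Qed.

Lemma sin_le_id (R : realType) (x : R) : 0 < x -> sin x <= x.
Proof.
move=> x0.
have hc : {within `[0, x], continuous (fun y : R => y - sin y)}.
  apply: continuous_subspaceT => y.
  apply: continuousB; [exact: cvg_id | exact: continuous_sin].
have [c _ h] := @MVT R (fun y => y - sin y) (fun y => 1 - cos y) 0 x x0 
  (fun y _ => is_deriveB _ _) hc.
move: h; rewrite sin0 subr0 subr0 => h.
by rewrite -subr_ge0 h mulr_ge0 ?subr_ge0 ?cos_le1 // ltW.
Qed.

Lemma Lge1 (R : realType) (dx dy : int) (L b : R) : 0 < L ->
  dx%:~R = L * cos b -> dy%:~R = L * sin b -> 1 <= L.
Proof.
move=> L0 ex ey.
have e : ((dx * dx + dy * dy)%R%:~R : R) = L ^+ 2.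
  rewrite rmorphD !rmorphM /= ex ey.
  have := cos2Dsin2 b; move=> h.
  transitivity (L^+2 * (cos b ^+ 2 + sin b ^+ 2)); first ring.
  by rewrite h mulr1.
have : (0 : R) < (dx * dx + dy * dy)%R%:~R by rewrite e exprn_gt0.
rewrite ltr0z gtz0_ge1 -(ler1z R) e => h.
nra.
Qed.

Lemma pairb (R : realType) (dx dy dx' dy' : int) (L L' b b' : R) :
  0 < L -> 0 < L' -> b < b' ->
  dx%:~R = L * cos b -> dy%:~R = L * sin b ->
  dx'%:~R = L' * cos b' -> dy'%:~R = L' * sin b' ->
  1 / (L * L') <= b' - b.
Proof.
move=> L0 L0' bb ex ey ex' ey'.
have L1 := @Lge1 R _ _ _ _ L0 ex ey.
have L1' := @Lge1 R _ _ _ _ L0' ex' ey'.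
have LL : 0 < L * L' by rewrite mulr_gt0.
rewrite ler_pdivrMr //.
have d0 : 0 < b' - b by rewrite subr_gt0.
case: (lerP 1 (b' - b)) => hd.
  nra.
have s0 : 0 < sin (b' - b) by apply: sin2_gt0; rewrite d0 /=; lra.
have ek : ((dx * dy' - dy * dx')%R%:~R : R) = L * L' * sin (b' - b).
  rewrite rmorphB !rmorphM /= ex ey ex' ey' sinB; ring.
have : (0 : R) < (dx * dy' - dy * dx')%R%:~R by rewrite ek mulr_gt0.
rewrite ltr0z gtz0_ge1 -(ler1z R) ek => h.
have := @sin_le_id R _ d0; nra.
Qed.

Theorem lemma7p1 (R : realType) (J : nat) (F : nat -> int * int)
    (L beta : nat -> R) :
  (2 <= J)%N ->
  (forall i j : nat, (1 <= i < J)%N -> (1 <= j < J)%N -> i != j ->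
     open_seg (ptR R (F i)) (ptR R (F i.+1)) `&`
     open_seg (ptR R (F j)) (ptR R (F j.+1)) = set0) ->
  (forall i : nat, (1 <= i < J)%N ->
     0 < L i /\
     ((F i.+1).1 - (F i).1)%:~R = L i * cos (beta i) /\
     ((F i.+1).2 - (F i).2)%:~R = L i * sin (beta i)) ->
  (forall i : nat, (1 <= i)%N -> (i.+1 < J)%N -> beta i < beta i.+1) ->
  beta J.-1 - beta 1 <= 2 * pi ->
  (J%:R : R) <= 2 + (beta J.-1 - beta 1) `^ (3^-1)
                    * (\sum_(1 <= i < J) L i) `^ (2 / 3).
Proof.
move=> hJ _ hF hb _.
case: J hJ hF hb => [|[|m]] // _ hF hb.
rewrite /= big_add1 /=.
have hl : forall i, (i <= m)%N -> 0 < L i.+1.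
  by move=> i hi; case: (hF i.+1 _) => //; rewrite /= ltnS ltnS.
have hbb : forall i, (i < m)%N -> 1 / (L i.+1 * L i.+2) <= beta i.+2 - beta i.+1.
  move=> i hi.
  have [h1 [h2 h3]] := hF i.+1 ltac:(by rewrite /= ltnS ltnS ltnW).
  have [h1' [h2' h3']] := hF i.+2 ltac:(by rewrite /= ltnS ltnS).
  apply: (@pairb R _ _ _ _ _ _ _ _ h1 h1' _ h2 h3 h2' h3').
  by apply: hb => //; rewrite ltnS ltnS.
have hc := @core R m (fun k => L k.+1) (fun k => beta k.+1) hl hbb.
move: hc => /=.
set Th := beta m.+1 - beta 1.
set S := \sum_(0 <= i < m.+1) L i.+1.
move=> hc.
have S0 : 0 < S.
  rewrite /S big_nat_recr //= ltr_pwDr ?hl //.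
  rewrite big_nat_cond; apply: sumr_ge0 => i /andP[/andP[_ hi] _].
  by rewrite ltW // hl // ltnW.
have [m0|mpos] := posnP m.
  by rewrite m0 lerDl mulr_ge0 // powR_ge0.
have Th0 : 0 < Th.
  have : 0 < Th * S ^+ 2.
    by apply: lt_le_trans hc; rewrite exprn_gt0 // ltr0n.
  by rewrite pmulr_lgt0 // exprn_gt0.
set x := Th `^ 3^-1.
set y := S `^ (2 / 3).
have ex : x ^+ 3 = Th.
  by rewrite /x -powR_mulrn ?powR_ge0 // -powRrM mulVf ?powRr1 // ?ltW // pnatr_eq0.
have ey : y ^+ 3 = S ^+ 2.
  rewrite /y -powR_mulrn ?powR_ge0 // -powRrM -powR_mulrn ?ltW //.
  by congr (_ `^ _); rewrite mulfVK // pnatr_eq0.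
have hxy : (m%:R : R) <= x * y.
  rewrite -(ler_pXn2r (_ : (0 < 3)%N)) ?nnegrE ?mulr_ge0 ?powR_ge0 //.
  by rewrite exprMn ex ey.
by rewrite -addn2 natrD addrC lerD2l.
Qed.
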